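(* Let $t\in\mathbb{N}$ and let $H$ be a graph with vertex set $A\cup T$ such that: (1) $|A|\ge 3t^2+t+1$; (2) $A$ is a clique in $H$; (3) $T=V(Q_1)\cup V(Q_2)\cup V(Q_3)$, where $Q_1,Q_2,Q_3$ are paths in $H$, each starting at a common vertex $w\notin A$ and ending in $A$, such that $Q_1-w$, $Q_2-w$, $Q_3-w$ are pairwise vertex-disjoint; (4) $\deg_H(w)=3$; (5) $|A\cap T|=3$, and the three vertices of $A\cap T$ are the endpoints $y_1,y_2,y_3$ of $Q_1,Q_2,Q_3$ different from $w$; (6) $H[V(Q_1)\cup V(Q_2)]$ is a chordless cycle; (7) $A\setminus T$ and $T\setminus A$ are anticomplete to each other. Then $H\xrightarrow{\cap} tS_{t,t,t}$.
   Context: All graphs are finite and simple. For graphs $G_1=(V_1,E_1)$, $G_2=(V_2,E_2)$, $G_1\cap G_2=(V_1\cap V_2, E_1\cap E_2)$. For a graph $G=(V,E)$ and an injective map $\alpha$ on $V$, $G^{\alpha}$ has vertex set $\alpha(V)$ and edge set $\{\{\alpha(v),\alpha(w)\}: \{v,w\}\in E\}$. We write $G\xrightarrow{\cap} H$ if $H$ is (isomorphic to) $G^{\alpha_1}\cap\cdots\cap G^{\alpha_k}$ for some $k\ge1$ and injective maps $\alpha_1,\dots,\alpha_k$ on $V(G)$. For integers $a,b,c\ge1$, $S_{a,b,c}$ is the tree consisting of a vertex of degree $3$ together with three pendant paths having $a$, $b$, $c$ edges respectively; $tS_{t,t,t}$ is the disjoint union of $t$ copies of $S_{t,t,t}$.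 Sets are anticomplete if no edge joins them. *)

(* Defs.v *)
From mathcomp Require Import all_boot.
Set Implicit Arguments. Unset Strict Implicit. Unset Printing Implicit Defensive.

Definition simple_graph (V : finType) (e : rel V) : Prop :=
  symmetric e /\ irreflexive e.

(* Vertex set and edge set of G^{al_1} ∩ ... ∩ G^{al_k}, the maps al_i : V -> nat
   being injective (all images living in the common universe nat). *)
Definition inter_vertex (V : finType) (k : nat) (al : 'I_k -> V -> nat) (x : nat) : Prop :=
  forall i, exists v, al i v = x.

Definition inter_edge (V : finType) (e : rel V) (k : nat) (al : 'I_k -> V -> nat)
  (x y : nat) : Prop :=
  forall i, exists v w, [/\ al i v = x, al i w = y & e v w].

Definition inter_iso (V : finType) (e : rel V) (k : nat) (al : 'I_k -> V -> nat)
  (W : finType) (eH : rel W) : Prop :=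
  exists f : W -> nat,
    [/\ injective f,
        (forall x, inter_vertex al x <-> exists u, f u = x) &
        (forall u v, inter_edge e al (f u) (f v) <-> eH u v)].

Definition inter_to (V : finType) (e : rel V) (W : finType) (eH : rel W) : Prop :=
  exists k, 0 < k /\
    exists al : 'I_k -> V -> nat, (forall i, injective (al i)) /\ inter_iso e al eH.

(* t S_{t,t,t}: vertices (c, None) = centre of copy c, (c, Some (j, m)) = vertex at
   distance m+1 from the centre on leg j of copy c. *)
Definition tS_vertex (t : nat) : finType := ('I_t * option ('I_3 * 'I_t))%type.

Definition spider_adj (t : nat) (p q : option ('I_3 * 'I_t)) : bool :=
  match p, q with
  | None, None => false
  | None, Some (_, m) => (m : nat) == 0
  | Some (_, m), None => (m : nat) == 0
  | Some (j, m), Some (j', m') => (j == j') && (((m : nat).+1 == m') || ((m' : nat).+1 == m))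
  end.

Definition tS_rel (t : nat) : rel (tS_vertex t) :=
  fun u v => (u.1 == v.1) && spider_adj u.2 v.2.

Definition induces_chordless_cycle (V : finType) (e : rel V) (S : {set V}) : Prop :=
  exists c : seq V,
    [/\ uniq c, [set x in c] = S, 3 <= size c &
        forall x y, x \in S -> y \in S -> e x y = (y == next c x) || (x == next c y)].

Definition is_path_from (V : finType) (e : rel V) (w : V) (q : seq V) : Prop :=
  path e w q /\ uniq (w :: q).
Arguments tS_rel t : clear implicits.

(* Main.v *)
Require Import Defs.
From mathcomp Require Import all_boot zify.
Set Implicit Arguments. Unset Strict Implicit. Unset Printing Implicit Defensive.

Section Ext.
Variables (V W : finType) (e : rel V) (eG : rel W) (A T : {set V}) (v0 : V).
Hypothesis esym : symmetric e.
Hypothesis Gsym : symmetric eG.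
Hypothesis Girr : irreflexive eG.
Hypothesis Aclique : forall x y, x \in A -> y \in A -> x != y -> e x y.

Definition ext (D : {set W}) (psi : W -> V) (a : W) : V :=
  if a \in D then psi a else nth v0 (enum (A :\: T)) (index a (enum (~: D))).

Lemma ext_out (D : {set W}) (psi : W -> V) a : #|~: D| <= #|A :\: T| -> a \notin D -> ext D psi a \in A :\: T.
Proof.
move=> hc ha; rewrite /ext (negbTE ha) -mem_enum; apply: mem_nth.
rewrite -cardE; apply: leq_trans hc.
by rewrite cardE index_mem mem_enum inE.
Qed.

Lemma ext_in (D : {set W}) (psi : W -> V) a : a \in D -> ext D psi a = psi a.
Proof. by move=> ha; rewrite /ext ha. Qed.

Lemma ext_inj (D : {set W}) (psi : W -> V) : {in D &, injective psi} -> (forall a, a \in D -> psi a \in T) ->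
  #|~: D| <= #|A :\: T| -> injective (ext D psi).
Proof.
move=> pinj pT hc a b.
case: (boolP (a \in D)) => ha; case: (boolP (b \in D)) => hb.
- by rewrite /ext ha hb; exact: pinj.
- move=> eq; have := ext_out psi hc hb; rewrite -eq /ext ha inE.
  by rewrite pT.
- move=> eq; have := ext_out psi hc ha; rewrite eq /ext hb inE.
  by rewrite pT.
- rewrite /ext (negbTE ha) (negbTE hb) => /eqP.
  have ia : index a (enum (~: D)) < size (enum (A :\: T)).
    by rewrite -cardE; apply: leq_trans hc; rewrite cardE index_mem mem_enum inE.
  have ib : index b (enum (~: D)) < size (enum (A :\: T)).
    by rewrite -cardE; apply: leq_trans hc; rewrite cardE index_mem mem_enum inE.
  rewrite (nth_uniq v0 ia ib (enum_uniq _)) => /eqP.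
  by apply: (index_inj a); rewrite mem_enum inE.
Qed.

Lemma ext_edge (D : {set W}) (psi : W -> V) : {in D &, injective psi} -> (forall a, a \in D -> psi a \in T) ->
  #|~: D| <= #|A :\: T| ->
  (forall a b, a \in D -> b \in D -> eG a b -> e (psi a) (psi b)) ->
  (forall a b, a \in D -> b \notin D -> eG a b -> psi a \in A) ->
  forall a b, eG a b -> e (ext D psi a) (ext D psi b).
Proof.
move=> pinj pT hc hin hbd a b eab.
have hneq : forall x y, x \in D -> y \notin D -> ext D psi x != ext D psi y.
  move=> x y hx hy; apply/eqP => eq; have := ext_out psi hc hy.
  by rewrite -eq ext_in // inE pT.
case: (boolP (a \in D)) => ha; case: (boolP (b \in D)) => hb.
- by rewrite !ext_in //; apply: hin.
- apply: Aclique; first by rewrite ext_in //; apply: (hbd a b).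
  + by have := ext_out psi hc hb; rewrite inE => /andP[].
  + exact: hneq.
- apply: Aclique; last by rewrite eq_sym; exact: hneq.
  + by have := ext_out psi hc ha; rewrite inE => /andP[].
  + by rewrite ext_in //; apply: (hbd b a) => //; rewrite Gsym.
- apply: Aclique.
  + by have := ext_out psi hc ha; rewrite inE => /andP[].
  + by have := ext_out psi hc hb; rewrite inE => /andP[].
  + apply/negP => /eqP /(ext_inj pinj pT hc) eqab.
    by rewrite eqab Girr in eab.
Qed.
End Ext.

Section Inter.
Variables (V W : finType) (e : rel V) (eG : rel W) (v0 : V) (Phi : W -> W -> V).
Hypothesis eirr : irreflexive e.
Hypothesis Phi_inj : forall z, injective (Phi z).
Hypothesis Phi_edge : forall z a b, eG a b -> e (Phi z a) (Phi z b).
Hypothesis Phi_sep : forall a b, a != b -> ~~ eG a b -> exists z, ~~ e (Phi z a) (Phi z b).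

Let k := #|W|.+2.
Definition sel (i : 'I_k) (a : W) : W := nth a (enum W) (if (i : nat) < #|W| then (i : nat) else 0).

Lemma sel_const i a b : sel i a = sel i b.
Proof.
rewrite /sel; apply: set_nth_default.
have : 0 < #|W| by apply/card_gt0P; exists a.
by rewrite -cardE; case: ifP.
Qed.

Definition phi (i : 'I_k) (a : W) : V := Phi (sel i a) a.

Lemma phi_inj i : injective (phi i).
Proof. by move=> a b; rewrite /phi (sel_const i b a); apply: Phi_inj. Qed.

Lemma phi_edge i a b : eG a b -> e (phi i a) (phi i b).
Proof. by rewrite /phi (sel_const i b a); apply: Phi_edge. Qed.

Lemma phi_cover z : exists i, phi i =1 Phi z.
Proof.
have hz : enum_rank z < k by rewrite /k (leq_trans (ltn_ord _)) // leqW.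
exists (Ordinal hz) => a; rewrite /phi /sel /= ltn_ord.
suff -> : nth a (enum W) (enum_rank z) = z by [].
by rewrite (set_nth_default z) ?nth_enum_rank // -cardE.
Qed.

Definition fcode (a : W) : nat := (enum_rank a : nat).*2.

Definition alpha (i : 'I_k) (v : V) : nat :=
  if [pick a | phi i a == v] is Some a then fcode a
  else (i + k * enum_rank v).*2.+1.

Lemma fcode_inj : injective fcode.
Proof. by move=> a b /double_inj /val_inj /enum_rank_inj. Qed.

Lemma alpha_phi i a : alpha i (phi i a) = fcode a.
Proof.
rewrite /alpha; case: pickP => [a' /eqP /phi_inj -> //|].
by move=> /(_ a); rewrite eqxx.
Qed.

Lemma alpha_even i v a : alpha i v = fcode a -> v = phi i a.
Proof.
rewrite /alpha; case: pickP => [a' /eqP <- /fcode_inj -> //|_].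
by move=> /(congr1 odd); rewrite /fcode /= !odd_double.
Qed.

Lemma alpha_inj i : injective (alpha i).
Proof.
move=> u v; rewrite {1}/alpha; case: pickP => [a /eqP <- |hu].
  by move=> /esym /alpha_even ->.
rewrite /alpha; case: pickP => [b /eqP <- | hv].
  by move=> /(congr1 odd); rewrite /fcode /= !odd_double.
move=> /eq_add_S /double_inj /eqP; rewrite eqn_add2l eqn_mul2l /= => /eqP.
by move=> /val_inj /enum_rank_inj.
Qed.

Lemma inter_ok : inter_to e eG.
Proof.
exists k; split => //; exists alpha; split; first exact: alpha_inj.
exists fcode; split; first exact: fcode_inj.
- move=> x; split.
  + move=> hx.
    have h0 : 0 < k by [].
    have h1 : 1 < k by [].
    case: (hx (Ordinal h0)) => v0' hv0; case: (hx (Ordinal h1)) => v1 hv1.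
    move: hv0; rewrite /alpha; case: pickP => [a _ <-|_ hx0]; first by exists a.
    move: hv1; rewrite /alpha; case: pickP => [a _ hfa|_ hx1].
      by move: hx0; rewrite -hfa => /(congr1 odd); rewrite /fcode /= !odd_double.
    move: hx1; rewrite -hx0 /= => /eq_add_S /double_inj /(congr1 (modn^~ k)).
    by rewrite add0n !(mulnC k) addnC modnMDl modnMl modn_small.
  + by case=> u <- i; exists (phi i u); rewrite alpha_phi.
- move=> a b; split.
  + move=> he; apply/negPn/negP => hn.
    have hab : a != b.
      apply/negP => /eqP hab; subst b.
      case: (he (Ordinal (isT : 0 < k))) => v [v' [/alpha_even hv /alpha_even hv' ev]].
      by rewrite hv hv' eirr in ev.
    case: (Phi_sep hab hn) => z hz.
    case: (phi_cover z) => i hi.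
    case: (he i) => v [v' [/alpha_even hv /alpha_even hv' ev]].
    by rewrite hv hv' !hi (negbTE hz) in ev.
  + move=> hab i; exists (phi i a), (phi i b); split; try exact: alpha_phi.
    exact: phi_edge.
Qed.
End Inter.

Section Spider.
Variables (t : nat) (V : finType) (e : rel V) (A T : {set V}) (w : V) (q1 q2 q3 : seq V).
Hypothesis esym : symmetric e.
Hypothesis wA : w \notin A.
Hypothesis P1 : is_path_from e w q1.
Hypothesis P2 : is_path_from e w q2.
Hypothesis P3 : is_path_from e w q3.
Hypothesis L1 : last w q1 \in A.
Hypothesis L2 : last w q2 \in A.
Hypothesis L3 : last w q3 \in A.
Hypothesis hT : T = [set x | x \in w :: q1] :|: [set x | x \in w :: q2] :|: [set x | x \in w :: q3].
Hypothesis D12 : [disjoint q1 & q2].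
Hypothesis D13 : [disjoint q1 & q3].
Hypothesis D23 : [disjoint q2 & q3].
Hypothesis hAT : A :&: T = [set last w q1; last w q2; last w q3].

Local Notation W := (tS_vertex t).

Definition qsel (j : 'I_3) : seq V := match (j : nat) with 0 => q1 | 1 => q2 | _ => q3 end.

Lemma qsel_P (P : seq V -> Prop) : P q1 -> P q2 -> P q3 -> forall j, P (qsel j).
Proof. by move=> h1 h2 h3 [[|[|[|m]]] hj]. Qed.

Lemma qsel_path j : path e w (qsel j).
Proof. by apply: (@qsel_P (path e w)); [case: P1|case: P2|case: P3]. Qed.
Lemma qsel_uniq j : uniq (w :: qsel j).
Proof. by apply: (@qsel_P (fun q => uniq (w :: q))); [case: P1|case: P2|case: P3]. Qed.
Lemma qsel_last j : last w (qsel j) \in A.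
Proof. by apply: (@qsel_P (fun q => last w q \in A)). Qed.
Lemma qsel_T j x : x \in w :: qsel j -> x \in T.
Proof. by apply: (qsel_P (P := fun q => x \in w :: q -> x \in T)); rewrite hT !inE => ->; rewrite ?orbT. Qed.
Lemma qsel_size j : 0 < size (qsel j).
Proof.
have := qsel_last j; case: (qsel j) => //= hw; by move: wA; rewrite hw.
Qed.

Lemma qsel_dis j j' x : j != j' -> x \in qsel j -> x \in qsel j' -> False.
Proof.
case: j => [[|[|[|m]]] hj] //; case: j' => [[|[|[|m']]] hj'] //; rewrite /qsel /= => _ ha hb.
- by rewrite (disjointFr D12 ha) in hb.
- by rewrite (disjointFr D13 ha) in hb.
- by rewrite (disjointFl D12 ha) in hb.
- by rewrite (disjointFr D23 ha) in hb.
- by rewrite (disjointFl D13 ha) in hb.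
- by rewrite (disjointFl D23 ha) in hb.
Qed.

Lemma AT3 x : x \in A -> x \in T -> [\/ x = last w q1, x = last w q2 | x = last w q3].
Proof.
move=> ha ht; have : x \in A :&: T by rewrite inE ha ht.
by rewrite hAT !inE => /orP[/orP[]|] /eqP ->; [constructor 1|constructor 2|constructor 3].
Qed.

(* the path y2 ... w ... y1 *)
Definition B := belast w q2.
Definition s := last w q2 :: rev B ++ q1.

Definition o0 : 'I_3 := @Ordinal 3 0 isT.
Definition o1 : 'I_3 := @Ordinal 3 1 isT.
Lemma q2_ne : q2 != [::].
Proof. by move: (qsel_size o1); rewrite /qsel /=; case: q2. Qed.
Lemma q1_ne : q1 != [::].
Proof. by move: (qsel_size o0); rewrite /qsel /=; case: q1. Qed.

Lemma s_path : path e (last w q2) (rev B ++ q1).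
Proof.
rewrite cat_path /B rev_path; apply/andP; split.
  have -> : path (fun z => e^~ z) w q2 = path e w q2.
    by apply: eq_path => a b /=; rewrite esym.
  by case: P2.
move: q2_ne; case: q2 => // a r _ /=; rewrite rev_cons last_rcons.
by case: P1.
Qed.

Lemma s_edge i : i.+1 < size s -> e (nth w s i) (nth w s i.+1).
Proof. by move=> hi; apply: (pathP w s_path). Qed.

Lemma B_notA x : x \in B -> x \in A -> False.
Proof.
move=> hx ha; have hx2 : x \in w :: q2 by apply: mem_belast.
have xw : x != w by apply: contraNneq wA => <-.
have hxq : x \in q2 by move: hx2; rewrite inE (negbTE xw).
case: (AT3 ha (qsel_T (j := o1) hx2)) => hxy.
- have : last w q1 \in w :: q1 := mem_last _ _.
  rewrite -hxy inE (negbTE xw) /= => h1.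
  by rewrite (disjointFr D12 h1) in hxq.
- have : uniq (w :: q2) := qsel_uniq o1; rewrite lastI rcons_uniq => /andP[hn _].
  by rewrite -hxy hx in hn.
- have : last w q3 \in w :: q3 := mem_last _ _.
  rewrite -hxy inE (negbTE xw) /= => h3.
  by rewrite (disjointFr D23 hxq) in h3.
Qed.

Lemma s_uniq : uniq s.
Proof.
have hu : uniq (w :: q2) := qsel_uniq o1; rewrite lastI rcons_uniq in hu.
case/andP: hu => hy2 huB.
have hy2q2 : last w q2 \in q2 by move: q2_ne; case: q2 => // a r _ /=; apply: mem_last.
rewrite /s /= cat_uniq rev_uniq huB mem_cat mem_rev negb_or hy2 /=.
rewrite (disjointFl D12 hy2q2) /=.
have [_ hq1] := P1; move: hq1 => /= /andP[wq1 ->]; rewrite andbT.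
apply/hasPn => x hx; rewrite mem_rev; apply/negP => hB.
have := mem_belast hB; rewrite inE => /orP[/eqP xw|hx2].
  by rewrite -xw hx in wq1.
by rewrite (disjointFr D12 hx) in hx2.
Qed.

Lemma s_T x : x \in s -> x \in T.
Proof.
rewrite /s inE mem_cat mem_rev => /orP[/eqP ->|/orP[hb|hq]].
- by apply: (qsel_T (j := o1)); apply: mem_last.
- by apply: (qsel_T (j := o1)); apply: mem_belast hb.
- by apply: (qsel_T (j := o0)); rewrite inE hq orbT.
Qed.

Lemma s_size : 2 < size s.
Proof.
rewrite /s /= size_cat size_rev /B size_belast.
move: q1_ne q2_ne; case: q1 => // ? ?; case: q2 => //= ? ? _ _; lia.
Qed.

Lemma s_head : nth w s 0 \in A.
Proof. by []. Qed.

Lemma s_lastA : nth w s (size s).-1 \in A.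
Proof.
rewrite nth_last /s /= last_cat.
by move: q1_ne L1; case: q1.
Qed.

Lemma s_1 : nth w s 1 \notin A.
Proof.
apply/negP => hA; move: hA; rewrite /s /= nth_cat size_rev /B size_belast.
have -> : 0 < size q2 by move: q2_ne; case: q2.
move=> hA; apply: (@B_notA (nth w (rev (belast w q2)) 0)) => //.
rewrite -mem_rev; apply: mem_nth; rewrite size_rev size_belast.
by move: q2_ne; case: q2.
Qed.

Definition Dc (c : 'I_t) : {set W} :=
  [set a : W | (a.1 == c) && (if a.2 is Some (j, m) then (m : nat) < size (qsel j) else true)].
Definition psic (a : W) : V := if a.2 is Some (j, m) then nth w (qsel j) m else w.

Definition idx (m0 : nat) (a : W) : nat := if a.2 is Some (_, m) then (m : nat).+1 - m0 else 0.
Definition Dl (c : 'I_t) (j0 : 'I_3) (m0 : nat) : {set W} :=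
  [set a : W | (a.1 == c) && (if a.2 is Some (j, m) then
      [&& j == j0, m0 <= (m : nat).+1 & (m : nat).+1 - m0 < size s] else m0 == 0)].
Definition psil (m0 : nat) (a : W) : V := nth w s (idx m0 a).


Lemma Dc_inj c : {in Dc c &, injective psic}.
Proof.
move=> [ca [[ja ma]|]] [cb [[jb mb]|]]; rewrite !inE /psic /= => /andP[/eqP -> ha] /andP[/eqP -> hb] //.
- move=> heq; case: (eqVneq ja jb) => hj.
  + subst jb; have /andP[_ hu] := qsel_uniq ja.
    move: heq => /eqP; rewrite (nth_uniq w ha hb hu) => /eqP /val_inj -> //.
  + exfalso; apply: (qsel_dis hj (mem_nth w ha)); rewrite heq; exact: mem_nth.
- move=> heq; have /andP[hn _] := qsel_uniq ja.
  by move: hn; rewrite -{1}heq mem_nth.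
- move=> heq; have /andP[hn _] := qsel_uniq jb.
  by move: hn; rewrite {1}heq mem_nth.
Qed.

Lemma Dc_T c a : a \in Dc c -> psic a \in T.
Proof.
case: a => [ca [[ja ma]|]]; rewrite inE /psic /= => /andP[_ ha].
- by apply: (qsel_T (j := ja)); rewrite inE mem_nth ?orbT.
- by apply: (qsel_T (j := o0)); rewrite inE eqxx.
Qed.

Lemma Dc_edge c a b : a \in Dc c -> b \in Dc c -> tS_rel t a b -> e (psic a) (psic b).
Proof.
case: a => [ca [[ja ma]|]]; case: b => [cb [[jb mb]|]];
  rewrite /tS_rel !inE /psic /= => /andP[_ ha] /andP[_ hb] /andP[_ hab] //.
- case/andP: hab => /eqP hj /orP[] /eqP hm; subst jb.
  + by have := pathP w (qsel_path ja) _ hb; rewrite -hm.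
  + by have := pathP w (qsel_path ja) _ ha; rewrite -hm esym.
- move/eqP: hab => hm.
  by have := pathP w (qsel_path ja) _ ha; rewrite hm /= esym.
- move/eqP: hab => hm.
  by have := pathP w (qsel_path jb) _ hb; rewrite hm /=.
Qed.

Lemma Dc_bd c a b : a \in Dc c -> b \notin Dc c -> tS_rel t a b -> psic a \in A.
Proof.
case: a => [ca [[ja ma]|]]; case: b => [cb [[jb mb]|]];
  rewrite /tS_rel !inE /psic /= => /andP[/eqP hc ha] hb /andP[/eqP hcb hab] //.
- move: hb; rewrite -hcb hc eqxx /= => hb.
  case/andP: hab => /eqP hj hm; subst jb.
  have -> : (ma : nat) = (size (qsel ja)).-1 by move: hm; lia.
  by rewrite nth_last qsel_last.
- by move: hb; rewrite -hcb hc eqxx.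
- move: hb; rewrite -hcb hc eqxx /= => hb.
  have := qsel_size jb; move: hab; lia.
Qed.


Lemma idx_lt c j0 m0 a : a \in Dl c j0 m0 -> idx m0 a < size s.
Proof.
case: a => [ca [[ja ma]|]]; rewrite inE /idx /=.
- by case/andP => _ /and3P[].
- by move=> _; apply: leq_trans s_size.
Qed.

Lemma Dl_inj c j0 m0 : {in Dl c j0 m0 &, injective (psil m0)}.
Proof.
move=> a b ha hb; rewrite /psil => /eqP.
rewrite (nth_uniq w (idx_lt ha) (idx_lt hb) s_uniq) => /eqP.
move: ha hb; case: a => [ca [[ja ma]|]]; case: b => [cb [[jb mb]|]];
  rewrite !inE /idx /= => /andP[/eqP -> ha] /andP[/eqP -> hb] //.
- case/and3P: ha => /eqP -> ha1 ha2; case/and3P: hb => /eqP -> hb1 hb2 hi.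
  have : (ma : nat) = mb by move: hi; lia.
  by move=> /val_inj ->.
- case/and3P: ha => _ ha1 ha2; move: hb; lia.
- case/and3P: hb => _ hb1 hb2; move: ha; lia.
Qed.

Lemma Dl_T c j0 m0 a : a \in Dl c j0 m0 -> psil m0 a \in T.
Proof. by move=> ha; apply: s_T; apply: mem_nth; apply: idx_lt ha. Qed.

Lemma Dl_edge c j0 m0 a b : a \in Dl c j0 m0 -> b \in Dl c j0 m0 -> tS_rel t a b ->
  e (psil m0 a) (psil m0 b).
Proof.
move=> ha hb hab.
have hk : (idx m0 b == (idx m0 a).+1) || (idx m0 a == (idx m0 b).+1).
  move: ha hb hab; case: a => [ca [[ja ma]|]]; case: b => [cb [[jb mb]|]];
  rewrite /tS_rel !inE /idx /= => /andP[_ ha] /andP[_ hb] /andP[_ hab] //.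
  + case/and3P: ha => _ ha1 ha2; case/and3P: hb => _ hb1 hb2.
    case/andP: hab => _; lia.
  + case/and3P: ha => _ ha1 ha2; move: hb hab; lia.
  + case/and3P: hb => _ hb1 hb2; move: ha hab; lia.
case/orP: hk => /eqP h; rewrite /psil h.
- by apply: s_edge; rewrite -h; apply: idx_lt hb.
- by rewrite esym; apply: s_edge; rewrite -h; apply: idx_lt ha.
Qed.

Lemma Dl_bd c j0 m0 a b : a \in Dl c j0 m0 -> b \notin Dl c j0 m0 -> tS_rel t a b ->
  psil m0 a \in A.
Proof.
move=> ha hb hab.
have hk : (idx m0 a == 0) || (idx m0 a == (size s).-1).
  move: ha hb hab; case: a => [ca [[ja ma]|]]; case: b => [cb [[jb mb]|]];
  rewrite /tS_rel !inE /idx /= => /andP[/eqP hc ha] hb /andP[/eqP hcb hab] //;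
  move: hb; rewrite -hcb hc eqxx /=.
  + case/and3P: ha => /eqP hj0 ha1 ha2; case/andP: hab => /eqP hj.
    rewrite -hj hj0 eqxx /=; lia.
  + case/and3P: ha => _ ha1 ha2; move: hab => /eqP hm0; rewrite hm0 in ha1 ha2 *.
    move=> hm; have -> : m0 = 1 by lia.
    by [].
case/orP: hk => /eqP h; rewrite /psil h.
- exact: s_head.
- exact: s_lastA.
Qed.


Definition Dz (z : W) : {set W} :=
  match z.2 with Some (j0, m0) => Dl z.1 j0 m0 | None => Dc z.1 end.
Definition psiz (z : W) : W -> V :=
  match z.2 with Some (_, m0) => psil m0 | None => psic end.

Lemma Dz_inj z : {in Dz z &, injective (psiz z)}.
Proof. by case: z => c [[j0 m0]|]; [apply: Dl_inj|apply: Dc_inj]. Qed.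
Lemma Dz_T z a : a \in Dz z -> psiz z a \in T.
Proof. by case: z => c [[j0 m0]|]; [apply: Dl_T|apply: Dc_T]. Qed.
Lemma Dz_edge z a b : a \in Dz z -> b \in Dz z -> tS_rel t a b -> e (psiz z a) (psiz z b).
Proof. by case: z => c [[j0 m0]|]; [apply: Dl_edge|apply: Dc_edge]. Qed.
Lemma Dz_bd z a b : a \in Dz z -> b \notin Dz z -> tS_rel t a b -> psiz z a \in A.
Proof. by case: z => c [[j0 m0]|]; [apply: Dl_bd|apply: Dc_bd]. Qed.

Lemma Dz_self z : z \in Dz z.
Proof.
case: z => c [[j0 m0]|]; rewrite /Dz /= inE /= eqxx //=.
by rewrite eqxx leqnSn subSnn /=; apply: ltnW s_size.
Qed.

Lemma psiz_self z : psiz z z \notin A.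
Proof.
case: z => c [[j0 m0]|]; rewrite /psiz /=; last exact: wA.
by rewrite /psil /idx /= subSnn; apply: s_1.
Qed.

Lemma Dz_card z : 1 < #|Dz z|.
Proof.
apply/card_gt1P; case: z => c [[j0 m0]|].
  case: m0 => m hm; case: m hm => [|m] hm.
    exists (c, Some (j0, Ordinal hm)), (c, None); split => //.
    - by apply: Dz_self.
    - by rewrite /Dz inE /= eqxx.
    - by apply/eqP => -[].
  have hm' : m < t by apply: ltnW.
  exists (c, Some (j0, Ordinal hm)), (c, Some (j0, Ordinal hm')); split => //.
  - by apply: Dz_self.
  - rewrite /Dz inE /= !eqxx /= leqnn subnn /=.
    by apply: leq_ltn_trans s_size.
  - by apply/eqP => [[]] /eqP; rewrite eqn_leq ltnn.
have ht : 0 < t by apply: leq_ltn_trans (ltn_ord c).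
exists (c, None), (c, Some (o0, Ordinal ht)); split => //.
- by apply: Dz_self.
- by rewrite /Dz inE /= eqxx /=; apply: qsel_size.
- by apply/eqP => -[].
Qed.

Lemma sep u v : u != v -> ~~ tS_rel t u v ->
  exists z, ((z == u) && (v \notin Dz z)) || ((z == v) && (u \notin Dz z)).
Proof.
case: u => [cu ou]; case: v => [cv ov] huv hn.
case: (eqVneq cu cv) => hc; last first.
  exists (cu, ou); rewrite eqxx /=; case: ou {huv hn} => [[j m]|];
  by rewrite /Dz /= inE /= eq_sym (negbTE hc).
subst cv; move: huv hn.
case: ou => [[ja ma]|]; case: ov => [[jb mb]|]; rewrite /tS_rel /= eqxx /= => huv hn.
- case: (eqVneq ja jb) => hj.
  + subst jb.
    have hm : (ma : nat) != mb by apply: contraNneq huv => /val_inj ->.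
    case: (ltngtP ma mb) => hlt.
    * exists (cu, Some (ja, mb)); apply/orP; right; rewrite eqxx /= /Dz /= inE /= !eqxx /=.
      move: hn; rewrite eqxx /=; lia.
    * exists (cu, Some (ja, ma)); rewrite eqxx /= /Dz /= inE /= !eqxx /=.
      move: hn; rewrite eqxx /=; lia.
    * by move: hm; rewrite hlt eqxx.
  + exists (cu, Some (ja, ma)); rewrite eqxx /= /Dz /= inE /= eqxx /=.
    by rewrite eq_sym (negbTE hj).
- exists (cu, Some (ja, ma)); rewrite eqxx /= /Dz /= inE /= eqxx /=.
  by rewrite hn.
- exists (cu, Some (jb, mb)); apply/orP; right; rewrite eqxx /= /Dz /= inE /= eqxx /=.
  by rewrite hn.
- by [].

Qed.

End Spider.

Lemma tS_sym t : symmetric (tS_rel t).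
Proof.
move=> [ca oa] [cb ob]; rewrite /tS_rel /= eq_sym; congr (_ && _).
case: oa => [[ja ma]|]; case: ob => [[jb mb]|] //=.
by rewrite eq_sym orbC.
Qed.

Lemma tS_irr t : irreflexive (tS_rel t).
Proof.
move=> [c [[j m]|]]; rewrite /tS_rel /= ?eqxx //=.
by rewrite -[X in _ == X]addn0 -addn1 !eqn_add2l.
Qed.

Theorem mainTheorem9 (t : nat) (V : finType) (e : rel V) (A T : {set V})
  (w : V) (q1 q2 q3 : seq V) :
  simple_graph e ->
  A :|: T = setT ->
  3 * t ^ 2 + t + 1 <= #|A| ->
  (forall x y, x \in A -> y \in A -> x != y -> e x y) ->
  w \notin A ->
  is_path_from e w q1 -> is_path_from e w q2 -> is_path_from e w q3 ->
  last w q1 \in A -> last w q2 \in A -> last w q3 \in A ->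
  T = [set x | x \in w :: q1] :|: [set x | x \in w :: q2] :|: [set x | x \in w :: q3] ->
  [disjoint q1 & q2] -> [disjoint q1 & q3] -> [disjoint q2 & q3] ->
  #|[set x | e w x]| = 3 ->
  #|A :&: T| = 3 ->
  A :&: T = [set last w q1; last w q2; last w q3] ->
  induces_chordless_cycle e ([set x | x \in w :: q1] :|: [set x | x \in w :: q2]) ->
  (forall x y, x \in A :\: T -> y \in T :\: A -> ~~ e x y) ->
  inter_to e (tS_rel t).
Proof.
move=> [esym eirr] _ hA Acl wA P1 P2 P3 L1 L2 L3 hT D12 D13 D23 _ hAT3 hAT _ h7.
pose Dz' := @Dz t V w q1 q2 q3.
pose psiz' := @psiz t V w q1 q2 q3.
have hcard : forall z, #|~: Dz' z| <= #|A :\: T|.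
  move=> z; have h2 : 1 < #|Dz' z| by apply: (@Dz_card t V A w q1 q2 q3).
  have hC := cardsC (Dz' z).
  have hW : #|tS_vertex t| = t * (3 * t).+1.
    by rewrite /tS_vertex card_prod card_option card_prod !card_ord.
  rewrite cardsD hAT3; move: hA h2 hC hW; rewrite -mulnn /Dz'; nia.
pose Phi z := ext A T w (Dz' z) (psiz' z).
apply: (@inter_ok _ _ _ _ Phi eirr).
- move=> z; apply: ext_inj (hcard z).
  + by apply: (@Dz_inj t V e A w q1 q2 q3).
  + by move=> a0; apply: (@Dz_T t V A T w q1 q2 q3).
- move=> z a b; rewrite /Phi; apply: (ext_edge w (@tS_sym t) (@tS_irr t) Acl _ _ (hcard z)).
  + by apply: (@Dz_inj t V e A w q1 q2 q3).
  + by move=> a0; apply: (@Dz_T t V A T w q1 q2 q3).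
  + by move=> a0 b0; apply: (@Dz_edge t V e A w q1 q2 q3).
  + by move=> a0 b0; apply: (@Dz_bd t V A w q1 q2 q3).
- move=> a b hab hn.
  have [z hz] : exists z, ((z == a) && (b \notin Dz' z)) || ((z == b) && (a \notin Dz' z)).
    by apply: (@sep t V A w q1 q2 q3).
  exists z.
  have hzz : Phi z z \in T :\: A.
    have hzD : z \in Dz' z by apply: (@Dz_self t V A w q1 q2 q3).
    rewrite /Phi ext_in // inE.
    rewrite (@psiz_self t V e A T w q1 q2 q3) //=.
    by apply: (@Dz_T t V A T w q1 q2 q3).
  case/orP: hz => /andP[/eqP hza hv]; subst z.
  + rewrite esym; apply: (h7 _ _ _ hzz).
    by apply: ext_out (hcard a) hv.
  + apply: (h7 _ _ _ hzz).
    by apply: ext_out (hcard b) hv.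
Qed.
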